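(* Let $V$ be a finite-dimensional vector space over $\Bbbk$ and let $\mathcal E\subset\operatorname{End}(V)$ be a linear subspace which is a semigroup (closed under composition and containing $\mathrm{id}_V$). Then $\mathcal E(v)=M(v)=\mathcal D_{\mathcal E}(v)$ for all $v\in V$. In particular, a closed subvariety $Y\subset V$ is $\mathcal D_{\mathcal E}$-invariant if and only if it is $\mathcal E$-stable. Moreover, $\mathcal E(w)=\mathcal E(v)$ for all $w$ in an open neighborhood of $v$ in $\mathcal E(v)$.
   Context: $\Bbbk$ is algebraically closed of characteristic $0$. $\operatorname{End}(V)$ is the set of all polynomial maps $V\to V$. Vector fields on $V$ are identified with polynomial maps $\xi\colon V\to V$, $\xi(v)\in V=T_vV$. $\mathcal D_{\mathcal E}$ is the set of vector fields $v\mapsto\phi(v)$ for $\phi\in\mathcal E$, and $\mathcal D_{\mathcal E}(v)=\{\xi(v)\mid\xi\in\mathcal D_{\mathcal E}\}\subset V$. A closed subvariety $Y\subset V$ is $\mathcal D_{\mathcal E}$-invariant if $\xi(y)\in T_yY$ for all $y\in Y$ and $\xi\in\mathcal D_{\mathcal E}$; $M(v)$ is the smallest closed $\mathcal D_{\mathcal E}$-invariant subvariety containing $v$. $\mathcal E(v)=\{\phi(v)\mid\phi\in\mathcal E\}$; $Y$ is $\mathcal E$-stable if $\phi(Y)\subset Y$ for all $\phi\in\mathcal E$. *)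

(* Defs.v *)
From HB Require Import structures.
From mathcomp Require Import all_boot all_order all_algebra.
From mathcomp Require Import mpoly.
Set Implicit Arguments. Unset Strict Implicit. Unset Printing Implicit Defensive.
Import GRing.Theory.
Local Open Scope ring_scope.

Section Defs.
Variables (k : fieldType) (n : nat).
Local Notation V := 'rV[k]_n.
Local Notation P := {mpoly k[n]}.

Definition peval (p : P) (v : V) : k := p.@[fun j => v ord0 j].

(* polynomial maps V -> V (elements of End(V)) *)
Definition polymap (f : V -> V) : Prop :=
  exists F : 'I_n -> P, forall v i, f v ord0 i = peval (F i) v.

Definition lin_semigroup (E : (V -> V) -> Prop) : Prop :=
  (forall f, E f -> polymap f) /\
  E (fun _ => 0) /\
  (forall f g, E f -> E g -> E (fun x => f x + g x)) /\
  (forall (c : k) f, E f -> E (fun x => c *: f x)) /\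
  E id /\
  (forall f g, E f -> E g -> E (f \o g)).

Definition zclosed (Y : V -> Prop) : Prop :=
  exists S : P -> Prop, forall x, Y x <-> (forall p, S p -> peval p x = 0).

Definition zopen_in (X U : V -> Prop) : Prop :=
  exists Z : V -> Prop, zclosed Z /\ forall x, U x <-> (X x /\ ~ Z x).

Definition pdiff (p : P) (y w : V) : k :=
  \sum_(i < n) peval (mderiv i p) y * w ord0 i.

Definition tangent (Y : V -> Prop) (y w : V) : Prop :=
  forall p : P, (forall z, Y z -> peval p z = 0) -> pdiff p y w = 0.

Definition DE (E : (V -> V) -> Prop) : (V -> V) -> Prop :=
  fun xi => exists phi, E phi /\ forall v, xi v = phi v.

Definition DE_at (E : (V -> V) -> Prop) (v : V) : V -> Prop :=
  fun x => exists xi, DE E xi /\ xi v = x.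

Definition Eorbit (E : (V -> V) -> Prop) (v : V) : V -> Prop :=
  fun x => exists phi, E phi /\ phi v = x.

Definition DE_invariant (E : (V -> V) -> Prop) (Y : V -> Prop) : Prop :=
  forall xi y, DE E xi -> Y y -> tangent Y y (xi y).

Definition E_stable (E : (V -> V) -> Prop) (Y : V -> Prop) : Prop :=
  forall phi y, E phi -> Y y -> Y (phi y).

Definition is_M (E : (V -> V) -> Prop) (v : V) (Y : V -> Prop) : Prop :=
  [/\ zclosed Y, DE_invariant E Y, Y v &
      forall Z, zclosed Z -> DE_invariant E Z -> Z v -> forall x, Y x -> Z x].

Definition set_eq (A B : V -> Prop) : Prop := forall x, A x <-> B x.

End Defs.

(* Main.v *)
Require Import Defs.
From HB Require Import structures.
From mathcomp Require Import all_boot all_order all_algebra.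
From mathcomp Require Import mpoly.
Set Implicit Arguments. Unset Strict Implicit. Unset Printing Implicit Defensive.
Import GRing.Theory.
Local Open Scope ring_scope.

Section Analytic.
Variables (k : fieldType) (n : nat).
Local Notation V := 'rV[k]_n.
Local Notation P := {mpoly k[n]}.

Definition Du (u : V) (p : P) : P := \sum_(i < n) u ord0 i *: mderiv i p.
Definition Lh (y u : V) (i : 'I_n) : {poly k} := (y ord0 i)%:P + (u ord0 i)%:P * 'X.
Definition Lm (y u : V) (p : P) : {poly k} := mmap (@polyC k) (Lh y u) p.

Lemma LmD y u p q : Lm y u (p + q) = Lm y u p + Lm y u q.
Proof. exact: mmapD. Qed.
Lemma LmM y u p q : Lm y u (p * q) = Lm y u p * Lm y u q.
Proof. exact: rmorphM. Qed.
Lemma LmZ y u c p : Lm y u (c *: p) = c%:P * Lm y u p.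
Proof. exact: mmapZ. Qed.
Lemma LmC y u c : Lm y u c%:MP = c%:P.
Proof. exact: mmapC. Qed.
Lemma Lm1 y u : Lm y u 1 = 1.
Proof. exact: rmorph1. Qed.
Lemma LmX y u i : Lm y u 'X_i = Lh y u i.
Proof. by rewrite /Lm mmapX mmap1U. Qed.

Lemma Lm_horner y u p t : (Lm y u p).[t] = peval p (y + t *: u).
Proof.
rewrite /Lm /mmap /peval mevalE horner_sum; apply: eq_bigr => m _.
rewrite hornerM hornerC /mmap1 horner_prod; congr (_ * _); apply: eq_bigr => i _.
by rewrite horner_exp /Lh hornerD hornerC hornerM hornerC hornerX !mxE mulrC.
Qed.

Lemma DuD u p q : Du u (p + q) = Du u p + Du u q.
Proof. by rewrite /Du -big_split; apply: eq_bigr => i _; rewrite mderivD scalerDr. Qed.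
Lemma DuZ u c p : Du u (c *: p) = c *: Du u p.
Proof. by rewrite /Du scaler_sumr; apply: eq_bigr => i _; rewrite mderivZ !scalerA mulrC. Qed.
Lemma DuM u p q : Du u (p * q) = Du u p * q + p * Du u q.
Proof.
rewrite /Du mulr_suml mulr_sumr -big_split; apply: eq_bigr => i _.
by rewrite mderivM scalerDr scalerAl scalerAr.
Qed.
Lemma DuC u c : Du u c%:MP = 0.
Proof. by rewrite /Du big1 // => i _; rewrite mderivC scaler0. Qed.
Lemma DuX u j : Du u 'X_j = (u ord0 j)%:MP.
Proof.
rewrite /Du (bigD1 j) //= big1 ?addr0.
  rewrite mderivX mnm1E eqxx. have -> : (U_(j) - U_(j))%MM = 0%MM by apply/mnmP => l; rewrite mnmBE subnn mnm0E.
  by rewrite mpolyX0 scale1r -alg_mpolyC.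
move=> i nij; rewrite mderivX mnm1E eq_sym (negbTE nij) scale0r scaler0 //.
Qed.

Lemma der_uniq y u (D1 D2 : P -> {poly k}) :
  (forall p q, D1 (p + q) = D1 p + D1 q) -> (forall p q, D2 (p + q) = D2 p + D2 q) ->
  (forall c p, D1 (c *: p) = c%:P * D1 p) -> (forall c p, D2 (c *: p) = c%:P * D2 p) ->
  (forall p q, D1 (p * q) = D1 p * Lm y u q + Lm y u p * D1 q) ->
  (forall p q, D2 (p * q) = D2 p * Lm y u q + Lm y u p * D2 q) ->
  D1 1 = D2 1 -> (forall i, D1 'X_i = D2 'X_i) -> forall p, D1 p = D2 p.
Proof.
move=> hD1 hD2 hZ1 hZ2 hM1 hM2 h1 hX.
have D10 : D1 0 = 0 by apply: (addrI (D1 0)); rewrite -hD1 !addr0.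
have D20 : D2 0 = 0 by apply: (addrI (D2 0)); rewrite -hD2 !addr0.
have hMo : forall m, D1 'X_[m] = D2 'X_[m].
  move=> m; rewrite mpolyXE_id.
  apply: (big_ind (fun q => D1 q = D2 q)) => //.
    by move=> a b ea eb; rewrite hM1 hM2 ea eb.
  move=> i _; elim: (m i) => [|e IH]; first by rewrite !expr0.
  by rewrite exprS hM1 hM2 IH hX.
elim/mpolyind => [|c m p _ _ IH]; first by rewrite D10 D20.
by rewrite hD1 hD2 hZ1 hZ2 hMo IH.
Qed.

Lemma Lm_deriv y u p : (Lm y u p)^`() = Lm y u (Du u p).
Proof.
apply: (@der_uniq y u (fun p => (Lm y u p)^`()) (fun p => Lm y u (Du u p))) => //=.
- by move=> p1 q; rewrite LmD derivD.
- by move=> p1 q; rewrite DuD LmD.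
- by move=> c p1; rewrite LmZ !mul_polyC derivZ.
- by move=> c p1; rewrite DuZ LmZ.
- by move=> p1 q; rewrite LmM derivM.
- by move=> p1 q; rewrite DuM LmD !LmM.
- by rewrite Lm1 derivC -mpolyC1 DuC LmC.
- by move=> i; rewrite LmX DuX LmC /Lh derivD derivC add0r mul_polyC derivZ derivX alg_polyC.
Qed.



Section Char0.
Hypothesis hk : [pchar k] =i pred0.

Lemma natr0E m : ((m%:R : k) == 0) = (m == 0)%N.
Proof. exact: (pcharf0P k).1 hk m. Qed.

Lemma natr_inj : injective (fun m : nat => (m%:R : k)).
Proof.
have W a b : (a <= b)%N -> (a%:R : k) = b%:R -> a = b.
  move=> le e; have /eqP : ((b - a)%:R : k) = 0 by rewrite natrB // e subrr.
  by rewrite natr0E subn_eq0 => ba; apply/eqP; rewrite eqn_leq le ba.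
move=> a b /= e; case: (leqP a b) => [le|/ltnW lt]; first exact: W.
by apply/esym/W.
Qed.

Lemma poly_all0 (q : {poly k}) : (forall t, q.[t] = 0) -> q = 0.
Proof.
move=> h; apply/eqP; apply: contraT => nz.
have := @max_poly_roots _ q [seq i%:R | i <- iota 0 (size q)] nz.
rewrite size_map size_iota ltnn; apply.
  by apply/allP => x _; rewrite /root h.
by rewrite map_inj_uniq ?iota_uniq //; apply: natr_inj.
Qed.

Lemma line_lemma p y u : (forall t, peval p (y + t *: u) = 0) -> peval (Du u p) y = 0.
Proof.
move=> h; have L0 : Lm y u p = 0 by apply: poly_all0 => t; rewrite Lm_horner h.
have := Lm_horner y u (Du u p) 0; rewrite -Lm_deriv L0 deriv0 horner0 scale0r addr0.
by move=> <-.
Qed.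

Lemma taylor p y u : (forall j, peval (iter j (Du u) p) y = 0) ->
  forall t, peval p (y + t *: u) = 0.
Proof.
move=> h t; rewrite -Lm_horner.
suff -> : Lm y u p = 0 by rewrite horner0.
apply/polyP => j; rewrite coef0.
have dj : (Lm y u p)^`(j) = Lm y u (iter j (Du u) p).
  elim: j {h} => [|j IH] /=; first by [].
  by rewrite IH Lm_deriv.
have := h j; rewrite -[y](addr0) -(scale0r u) -Lm_horner -dj horner_coef0 coef_derivn addn0.
move/eqP; rewrite -mulr_natr mulf_eq0 natr0E ffactnn (negbTE (lt0n_neq0 (fact_gt0 j))) orbF => /eqP.
by rewrite scale0r addr0.
Qed.

End Char0.
End Analytic.
From Stdlib Require Import ClassicalEpsilon FunctionalExtensionality.
From Stdlib Require Import Classical.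
Section LinAlg.
Variables (k : fieldType) (n : nat).
Local Notation V := 'rV[k]_n.
Local Notation P := {mpoly k[n]}.

Lemma subspace_mx (S : V -> Prop) : S 0 -> (forall a b, S a -> S b -> S (a + b)) ->
  (forall c a, S a -> S (c *: a)) -> exists A : 'M[k]_n, forall x, S x <-> (x <= A)%MS.
Proof.
move=> S0 SD SZ.
pose good (A : 'M[k]_n) := forall x : V, (x <= A)%MS -> S x.
have good0 : good 0 by move=> x; rewrite submx0 => /eqP ->.
have goodD A x : good A -> S x -> good (A + x)%MS.
  move=> gA Sx y /sub_addsmxP [[u1 u2] /= ->]; apply: SD; first by apply: gA; apply: submxMl.
  by rewrite [u2]mx11_scalar mul_scalar_mx; apply: SZ.
apply: NNPP => hno.
have H : forall r, exists A, good A /\ (r <= \rank A)%N.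
  elim => [|r [A [gA rA]]]; first by exists 0.
  have [x [Sx nx]] : exists x, S x /\ ~ (x <= A)%MS.
    apply: NNPP => hh; apply: hno; exists A => x; split => [Sx|]; last exact: gA.
    by apply: NNPP => nx; apply: hh; exists x.
  exists (A + x)%MS; split; first exact: goodD.
  apply: (leq_trans _ (rank_ltmx (_ : (A < A + x)%MS))) => //.
  rewrite ltmxE addsmxSl /=; apply/negP => sub; apply: nx.
  exact: submx_trans (addsmxSr A x) sub.
have [A [_ rA]] := H n.+1.
by have := rank_leq_col A; rewrite leqNgt (leq_trans _ rA).
Qed.

Definition lp (c : 'cV[k]_n) : P := \sum_(i < n) c i 0 *: 'X_i.

Lemma peval_lp c x : peval (lp c) x = (x *m c) 0 0.
Proof.
rewrite /lp /peval (big_morph _ (mevalD _) (meval0 _)) !mxE; apply: eq_bigr => i _.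
by rewrite mevalZ mevalXU mulrC.
Qed.

Lemma mulcol (x : V) (C : 'M[k]_n) j : (x *m col j C) 0 0 = (x *m C) 0 j.
Proof. by rewrite !mxE; apply: eq_bigr => l _; rewrite mxE. Qed.

Lemma zclosed_mx (A : 'M[k]_n) : zclosed (fun x : V => (x <= A)%MS).
Proof.
exists (fun p => exists j, p = lp (col j (cokermx A))) => x; split.
  move=> sx p [j ->]; rewrite peval_lp; move: sx; rewrite submxE => /eqP h.
  by rewrite mulcol h mxE.
move=> h; rewrite submxE; apply/eqP/matrixP => i j; rewrite ord1 [RHS]mxE.
by have := h _ (ex_intro _ j erefl); rewrite peval_lp mulcol.
Qed.

End LinAlg.
Section Calc.
Variables (k : fieldType) (n : nat).
Local Notation V := 'rV[k]_n.
Local Notation P := {mpoly k[n]}.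

Definition iterD (us : seq V) (p : P) := foldr (@Du k n) p us.
Definition Dv (chi : 'I_n -> P) (q : P) : P := \sum_(i < n) chi i * mderiv i q.
Definition rowev (chi : 'I_n -> P) (x : V) : V := \row_i peval (chi i) x.

Lemma Du0 u : Du u (0 : P) = 0.
Proof. by rewrite -(mpolyC0) DuC. Qed.
Lemma DuN u (p : P) : Du u (- p) = - Du u p.
Proof. by rewrite -scaleN1r DuZ scaleN1r. Qed.
Lemma DuB u (p q : P) : Du u (p - q) = Du u p - Du u q.
Proof. by rewrite DuD DuN. Qed.
Lemma Du_sum u (F : 'I_n -> P) : Du u (\sum_i F i) = \sum_i Du u (F i).
Proof. exact: (big_morph _ (DuD u) (Du0 u)). Qed.

Lemma mderiv_Du i u (p : P) : mderiv i (Du u p) = Du u (mderiv i p).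
Proof.
rewrite /Du (big_morph _ (mderivD i) (mderiv0 _ i)); apply: eq_bigr => j _.
by rewrite mderivZ mderiv_comm.
Qed.

Lemma Du_comm u w (p : P) : Du u (Du w p) = Du w (Du u p).
Proof.
rewrite {1}/Du; under eq_bigr do rewrite mderiv_Du -DuZ.
by rewrite -Du_sum.
Qed.

Lemma iterD_D us (p q : P) : iterD us (p + q) = iterD us p + iterD us q.
Proof. by elim: us => //= u us ->; rewrite DuD. Qed.
Lemma iterD_B us (p q : P) : iterD us (p - q) = iterD us p - iterD us q.
Proof. by elim: us => //= u us ->; rewrite DuB. Qed.
Lemma iterD_Z us c (p : P) : iterD us (c *: p) = c *: iterD us p.
Proof. by elim: us => //= u us ->; rewrite DuZ. Qed.
Lemma iterD_sum us (F : 'I_n -> P) : iterD us (\sum_i F i) = \sum_i iterD us (F i).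
Proof.
apply: (big_morph _ (iterD_D us)).
by elim: us => //= u us ->; rewrite Du0.
Qed.

Lemma Du_iterD u us (p : P) : Du u (iterD us p) = iterD us (Du u p).
Proof. by elim: us => //= w us <-; rewrite Du_comm. Qed.

Lemma iterD_rcons vs u (q : P) : iterD vs (Du u q) = iterD (vs ++ [:: u]) q.
Proof. by rewrite /iterD foldr_cat. Qed.

Lemma Du_Dv u chi (q : P) :
  Du u (Dv chi q) = Dv (fun i => Du u (chi i)) q + Dv chi (Du u q).
Proof.
rewrite /Dv Du_sum -big_split; apply: eq_bigr => i _.
by rewrite DuM mderiv_Du.
Qed.

Lemma peval_sum (F : 'I_n -> P) x : peval (\sum_i F i) x = \sum_i peval (F i) x.
Proof. exact: (big_morph _ (mevalD _) (meval0 _)). Qed.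

Lemma peval_Dv chi (q : P) x : peval (Dv chi q) x = peval (Du (rowev chi x) q) x.
Proof.
rewrite /Dv /Du !peval_sum; apply: eq_bigr => i _.
by rewrite /peval mevalM mevalZ mxE.
Qed.

Lemma pdiff_Du (p : P) y w : pdiff p y w = peval (Du w p) y.
Proof.
rewrite /pdiff /Du peval_sum; apply: eq_bigr => i _.
by rewrite /peval mevalZ mulrC.
Qed.

Lemma iterD_C us c : iterD us (c%:MP : P) = if us is [::] then c%:MP else 0.
Proof.
case: us => //= u us; elim: us u => /= [|w us IH] u; first by rewrite DuC.
by rewrite IH Du0.
Qed.

End Calc.
Section Main.
Variables (k : fieldType) (n : nat) (E : ('rV[k]_n -> 'rV[k]_n) -> Prop).
Hypothesis hk : [pchar k] =i pred0.
Hypothesis hE : lin_semigroup E.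
Local Notation V := 'rV[k]_n.
Local Notation P := {mpoly k[n]}.

Lemma Epoly f : E f -> polymap f. Proof. by case: hE => h _; apply: h. Qed.
Lemma E0 : E (fun _ => 0). Proof. by case: hE => _ [h _]. Qed.
Lemma EaddD f g : E f -> E g -> E (fun x => f x + g x). Proof. by case: hE => _ [_ [h _]]; apply: h. Qed.
Lemma EZ c f : E f -> E (fun x => c *: f x). Proof. by case: hE => _ [_ [_ [h _]]]; apply: h. Qed.
Lemma Eid : E id. Proof. by case: hE => _ [_ [_ [_ [h _]]]]. Qed.
Lemma Ecomp f g : E f -> E g -> E (f \o g). Proof. by case: hE => _ [_ [_ [_ [_ h]]]]; apply: h. Qed.

Section Orbit.
Variable v : V.
Local Notation W := (Eorbit E v).

Lemma Wv : W v. Proof. by exists id; split => //; apply: Eid. Qed.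
Lemma W0 : W 0. Proof. by exists (fun _ => 0); split => //; apply: E0. Qed.
Lemma WD a b : W a -> W b -> W (a + b).
Proof. by move=> [f [Ef <-]] [g [Eg <-]]; exists (fun x => f x + g x); split => //; apply: EaddD. Qed.
Lemma WZ c a : W a -> W (c *: a).
Proof. by move=> [f [Ef <-]]; exists (fun x => c *: f x); split => //; apply: EZ. Qed.
Lemma WB a b : W a -> W b -> W (a - b).
Proof. by move=> Wa Wb; rewrite -scaleN1r; apply: WD => //; apply: WZ. Qed.
Lemma Wst x f : E f -> W x -> W (f x).
Proof. by move=> Ef [g [Eg <-]]; exists (f \o g); split => //; apply: Ecomp. Qed.
Lemma Wmx : exists A : 'M[k]_n, forall x, W x <-> (x <= A)%MS.
Proof. apply: subspace_mx; [exact: W0 | exact: WD | exact: WZ]. Qed.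

Definition inW (us : seq V) := forall u, u \in us -> W u.
Definition flat m (q : P) := forall us : seq V, (size us <= m)%N -> inW us -> peval (iterD us q) v = 0.
Definition tame (chi : 'I_n -> P) := forall us, inW us -> W (rowev (fun i => iterD us (chi i)) v).

Lemma inW_cons u us : inW (u :: us) -> W u /\ inW us.
Proof.
move=> h; split; first by apply: h; rewrite inE eqxx.
by move=> w wi; apply: h; rewrite inE wi orbT.
Qed.
Lemma inW_rcons u us : W u -> inW us -> inW (us ++ [:: u]).
Proof. by move=> Wu h w; rewrite mem_cat inE => /orP [/h|/eqP ->]. Qed.

Lemma flat_mono m m' q : (m <= m')%N -> flat m' q -> flat m q.
Proof. by move=> le h us s; apply: h; apply: leq_trans le. Qed.

Lemma flat_Du m u q : W u -> flat m.+1 q -> flat m (Du u q).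
Proof.
move=> Wu h us s hus; rewrite iterD_rcons; apply: h; last exact: inW_rcons.
by rewrite size_cat /= addn1.
Qed.

Lemma tame_Du u chi : W u -> tame chi -> tame (fun i => Du u (chi i)).
Proof.
move=> Wu h us hus; have := h _ (inW_rcons Wu hus).
by congr W; apply/rowP => i; rewrite !mxE iterD_rcons.
Qed.

Lemma iterD_Dv_split (u : V) (us : seq V) (chi : 'I_n -> P) (q : P) : iterD (u :: us) (Dv chi q) =
  iterD us (Dv (fun i => Du u (chi i)) q) + iterD us (Dv chi (Du u q)).
Proof. by rewrite /= Du_iterD Du_Dv iterD_D. Qed.

Lemma L_gen us : forall chi q, inW us -> tame chi -> flat (size us).+1 q ->
  peval (iterD us (Dv chi q)) v = 0.
Proof.
elim: us => [|u us IH] chi q hus ht hf.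
  rewrite /= peval_Dv; have := hf [:: rowev chi v] erefl.
  apply => w; rewrite inE => /eqP ->; have := ht [::] (fun w (i : w \in [::]) => match notF i with end).
  by congr W; apply/rowP => i; rewrite !mxE.
have [Wu hus'] := inW_cons hus.
rewrite iterD_Dv_split /peval mevalD -/(peval _ _) -/(peval _ _).
by rewrite (IH (fun i => Du u (chi i)) q hus' (tame_Du Wu ht) (flat_mono (leqnSn _) hf))
  (IH chi (Du u q) hus' ht (flat_Du Wu hf)) add0r.
Qed.

Lemma L0 us : forall chi q, inW us -> tame chi -> (forall i, peval (chi i) v = 0) ->
  flat (size us) q -> peval (iterD us (Dv chi q)) v = 0.
Proof.
elim: us => [|u us IH] chi q hus ht h0 hf.
  rewrite /= peval_Dv /Du peval_sum big1 // => i _.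
  by rewrite mxE h0 scale0r /peval meval0.
have [Wu hus'] := inW_cons hus.
rewrite iterD_Dv_split /peval mevalD -/(peval _ _) -/(peval _ _).
by rewrite (L_gen hus' (tame_Du Wu ht) hf) (IH chi (Du u q) hus' ht h0 (flat_Du Wu hf)) add0r.
Qed.

Lemma vanishW (r : P) : (forall x, W x -> peval r x = 0) ->
  forall us, inW us -> forall x, W x -> peval (iterD us r) x = 0.
Proof.
move=> hr; elim => [|u us IH] hus x Wx //=; first exact: hr.
have [Wu hus'] := inW_cons hus.
apply: line_lemma => // t; apply: IH => //; apply: WD => //; exact: WZ.
Qed.

Lemma tame_F f (F : 'I_n -> P) : E f -> (forall x i, f x ord0 i = peval (F i) x) -> tame F.
Proof.
move=> Ef hF us hus; have [A hA] := Wmx.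
apply/hA; rewrite submxE; apply/eqP/matrixP => i j; rewrite ord1 [RHS]mxE mxE.
pose r : P := \sum_l cokermx A l j *: F l.
have -> : \sum_l rowev (fun i0 : 'I_n => iterD us (F i0)) v 0 l * cokermx A l j =
  peval (iterD us r) v.
  rewrite iterD_sum peval_sum; apply: eq_bigr => l _.
  by rewrite mxE iterD_Z /peval mevalZ mulrC.
apply: vanishW => //; last exact: Wv.
move=> x Wx; rewrite peval_sum.
have : (f x <= A)%MS by apply/hA; apply: Wst.
rewrite submxE => /eqP /matrixP /(_ 0 j); rewrite !mxE => h; apply: (etrans _ h).
by apply: eq_bigr => l _; rewrite /peval mevalZ -/(peval _ _) -hF mulrC.
Qed.


Lemma main_min (Z : V -> Prop) : zclosed Z -> DE_invariant E Z -> Z v ->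
  forall x, W x -> Z x.
Proof.
move=> [SZ hSZ] hinv Zv.
pose IZ (q : P) := forall z, Z z -> peval q z = 0.
have IZD : forall f (F : 'I_n -> P) q, E f -> (forall x i, f x ord0 i = peval (F i) x) ->
    IZ q -> IZ (Dv F q).
  move=> f F q Ef hF hq z Zz; rewrite peval_Dv -pdiff_Du.
  have -> : rowev F z = f z by apply/rowP => i; rewrite mxE hF.
  apply: (hinv f z _ Zz q hq); by exists f.
have flatIZ : forall m q, IZ q -> flat m q.
  elim => [|m IH] q hq us.
    by case: us => // _ _; apply: hq.
  case: us => [_ _|u us]; first exact: hq.
  rewrite /= ltnS => s hus; have [Wu hus'] := inW_cons hus.
  have Wu0 := Wu.
  case: Wu => f [Ef fv]; have [F hF] := Epoly Ef.
  pose chi i := F i - (u ord0 i)%:MP.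
  have e : Du u q = Dv F q - Dv chi q.
    rewrite /Dv -sumrB /Du; apply: eq_bigr => i _.
    by rewrite -mulrBl /chi opprB addrC -addrA addNr addr0 mul_mpolyC.
  rewrite Du_iterD e iterD_B /peval mevalB -!/(peval _ _).
  rewrite (IH _ (IZD f F q Ef hF hq) us s hus').
  rewrite (@L0 us chi q hus') ?subrr //; last exact: (flat_mono s (IH q hq)).
    move=> vs hvs; have hT := tame_F Ef hF hvs.
    have -> : rowev (fun i => iterD vs (chi i)) v =
        rowev (fun i => iterD vs (F i)) v - (if vs is [::] then u else 0).
      apply/rowP => i; rewrite !mxE /chi iterD_B iterD_C /peval mevalB.
      by case: vs {hvs hT} => [|w vs] /=; rewrite ?mxE ?mevalC ?meval0.
    by apply: WB => //; case: vs {hvs hT} => [|w vs]; [exact: Wu0 | exact: W0].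
  by move=> i; rewrite /chi /peval mevalB mevalC -/(peval _ _) -hF fv subrr.
move=> x Wx; apply/hSZ => p Sp.
have hp : IZ p by move=> z /hSZ; apply.
have := @taylor _ _ hk p v (x - v) _ 1; rewrite scale1r addrCA subrr addr0; apply.
move=> j; have -> : iter j (Du (x - v)) p = iterD (nseq j (x - v)) p.
  by elim: j => //= j ->.
apply: flatIZ => //.
by move=> w; rewrite mem_nseq => /andP [_ /eqP ->]; apply: WB => //; apply: Wv.
Qed.

End Orbit.
Lemma fchoice (X Y : Type) (R : X -> Y -> Prop) :
  (forall a, exists b, R a b) -> exists f : X -> Y, forall a, R a (f a).
Proof.
move=> H; exists (fun a => proj1_sig (constructive_indefinite_description _ (H a))).
by move=> a; case: (constructive_indefinite_description _ (H a)).
Qed.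

Lemma E_sum m (c : 'I_m -> k) (phi : 'I_m -> V -> V) : (forall i, E (phi i)) ->
  forall s : seq 'I_m, E (fun y => \sum_(i <- s) c i *: phi i y).
Proof.
move=> hp; elim => [|i s IH].
  by have := E0; congr E; apply: functional_extensionality => y; rewrite big_nil.
have := EaddD (EZ (c i) (hp i)) IH; congr E; apply: functional_extensionality => y; by rewrite big_cons.
Qed.

Lemma open_part v : exists U : V -> Prop,
  zopen_in (Eorbit E v) U /\ U v /\ forall w, U w -> set_eq (Eorbit E w) (Eorbit E v).
Proof.
have [A hA] := Wmx v.
pose m := \rank A; pose R := row_base A.
have hrow : forall i : 'I_m, exists f, E f /\ f v = row i R.
  move=> i; apply/hA; apply: submx_trans (row_sub i R) _.
  by rewrite eq_row_base.
have [phi hphi] := fchoice hrow.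
have hpoly : forall i : 'I_m, exists F : 'I_n -> P, forall x j, phi i x ord0 j = peval (F j) x.
  by move=> i; apply: Epoly; case: (hphi i).
have [F hF] := fchoice hpoly.
have [B hB] := row_freeP (row_base_free A).
pose M (x : V) : 'M[k]_(m, n) := \matrix_(i, j) phi i x ord0 j.
have MvR : M v = R by apply/matrixP => i j; rewrite mxE (proj2 (hphi i)) mxE.
pose Q : 'M[P]_m := \matrix_(i, j) \sum_l F i l * (B l j)%:MP.
have hQ : forall x, peval (\det Q) x = \det (M x *m B).
  move=> x; rewrite /peval -det_map_mx; congr (\det _); apply/matrixP => i j.
  rewrite !mxE rmorph_sum; apply: eq_bigr => l _.
  by rewrite rmorphM /= mevalC mxE hF.
exists (fun w => Eorbit E v w /\ peval (\det Q) w != 0); split; last split.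
- exists (fun x => peval (\det Q) x = 0); split.
    by exists (fun p => p = \det Q) => x; split => [h p -> //|]; apply.
  by move=> x; split => [[Wx /eqP nz]|[Wx nz]]; split => //; apply/eqP.
- by split; [apply: Wv | rewrite hQ MvR hB det1 oner_neq0].
move=> w [Ww nz] x; split; first by move=> [f [Ef <-]]; apply: Wst.
move=> Wx.
have MA : (M w <= A)%MS.
  apply/row_subP => i; apply/hA.
  have -> : row i (M w) = phi i w by apply/rowP => j; rewrite !mxE.
  by apply: Wst => //; case: (hphi i).
have rk : \rank (M w) = \rank A.
  apply/eqP; rewrite eqn_leq mxrankS //=.
  have u : (M w *m B) \in unitmx by rewrite unitmxE unitfE -hQ.
  apply: (leq_trans _ (mxrankM_maxl (M w) B)); apply: eq_leq; exact: (esym (mxrank_unit u)).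
have eqMA : (M w == A)%MS by rewrite -(mxrank_leqif_eq MA) rk.
have : (x <= M w)%MS by rewrite (eqmxP eqMA); apply/hA.
case/submxP => D ->.
exists (fun y => \sum_(i <- index_enum 'I_m) D 0 i *: phi i y); split.
  by apply: E_sum => i; case: (hphi i).
apply/rowP => j; rewrite summxE !mxE; apply: eq_bigr => i _.
by rewrite !mxE.
Qed.

End Main.

Theorem lemma3p2p1 (k : closedFieldType) (hk : [pchar k] =i pred0) (n : nat)
  (E : ('rV[k]_n -> 'rV[k]_n) -> Prop) (hE : lin_semigroup E) :
  (forall v : 'rV[k]_n,
      is_M E v (Eorbit E v) /\ set_eq (Eorbit E v) (DE_at E v))
  /\ (forall Y : 'rV[k]_n -> Prop, zclosed Y -> (DE_invariant E Y <-> E_stable E Y))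
  /\ (forall v : 'rV[k]_n, exists U : 'rV[k]_n -> Prop,
        zopen_in (Eorbit E v) U /\ U v /\
        forall w, U w -> set_eq (Eorbit E w) (Eorbit E v)).
Proof.
split; last split.
- move=> v; split.
    split.
    + have [A hA] := Wmx hE v; have [S hS] := zclosed_mx A.
      by exists S => x; rewrite hA.
    + move=> xi y [f [Ef hxi]] Wy p hp; rewrite hxi pdiff_Du.
      apply: (line_lemma hk) => t; apply: hp.
      by apply: (WD hE) => //; apply: (WZ hE); apply: (Wst hE).
    + exact: (Wv hE).
    + by move=> Z hZ hinv Zv; apply: (main_min hk hE).
  move=> x; split.
    by move=> [f [Ef <-]]; exists f; split => //; exists f.
  by move=> [xi [[f [Ef hxi]] <-]]; exists f; split => //; rewrite hxi.
- move=> Y hY; split.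
    move=> hinv f y Ef Yy; apply: (main_min hk hE hY hinv Yy).
    by exists f.
  move=> hst xi y [f [Ef hxi]] Yy p hp; rewrite hxi pdiff_Du.
  apply: (line_lemma hk) => t; apply: hp.
  exact: (hst (fun x => x + t *: f x) y (EaddD hE (Eid hE) (EZ hE t Ef)) Yy).
- exact: (open_part hE).
Qed.
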